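(* Let $\alpha$ be a countable ordinal. For all $e,k\in\mathbb N$, all tuples $\vec a$ of natural numbers and all $b\in\mathbb N$, the set $$\{\vec f\in(\mathbb N^{\mathbb N})^k : \|\langle e,\vec a,\vec f,b\rangle\|_{\Omega_{\mathbf S}}<\alpha\}$$ is a Suslin set (a subset of $(\mathbb N^{\mathbb N})^k$).
   Context: The Suslin functional: $\mathbf S(g)=0$ if $\forall f\in\mathbb N^{\mathbb N}\exists n\,g(\bar f(n))=0$, and $1$ if $\exists f\forall n\,g(\bar f(n))>0$, $\bar f(n)=\langle f(0),\dots,f(n-1)\rangle$. $\Omega_{\mathbf S}$ is the set of tuples $\langle e,\vec a,\vec f,b\rangle$ with $\{e\}(\mathbf S,\vec a,\vec f)=b$ in the sense of Kleene computability (schemes S1–S9, arguments ordered as: $\mathbf S$, integers, functions), and $\|\cdot\|_{\Omega_{\mathbf S}}$ is the ordinal rank of the (well-founded) computation tree of the tuple; for tuples not in $\Omega_{\mathbf S}$ the condition $\|\cdot\|<\alpha$ is false. Suslin sets in $X=(\mathbb N^{\mathbb N})^k$: a Suslin scheme is $s\mapsto P_s\subseteq X$ on the set $\mathrm{SEQ}$ of finite sequences of naturals, $\mathbf A(\mathbf P)=\bigcup_f\bigcap_n P_{\bar f(n)}$; $\Sigma_0$ clopen sets; $\Sigma_\beta$ ($\beta>0$) sets $\mathbf A(\mathbf P)$ with each $P_s\in\Pi_\gamma$, some $\gamma<\beta$; $\Pi_\beta$ complements; Suslin sets $=\bigcup_{\beta<\omega_1}\Sigma_\beta$. *)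

(* Defs.v *)
From mathcomp Require Import all_boot.
Set Implicit Arguments. Unset Strict Implicit. Unset Printing Implicit Defensive.

(* Countable ordinals as Brouwer trees.  Every Brouwer tree denotes a  *)
(* countable ordinal (OZ = 0, OS a = a+1, OL f = sup_n f n) and every  *)
(* countable ordinal is denoted by some tree.                           *)
Inductive Ord : Type :=
| OZ : Ord
| OS : Ord -> Ord
| OL : (nat -> Ord) -> Ord.

(* ole a b <-> |a| <= |b| ;  olt a b <-> |a| < |b| *)
Inductive ole : Ord -> Ord -> Prop :=
| oleZ b : ole OZ b
| oleS a b : olt a b -> ole (OS a) b
| oleL f b : (forall n, ole (f n) b) -> ole (OL f) b
with olt : Ord -> Ord -> Prop :=
| oltS a b : ole a b -> olt a (OS b)
| oltL a f n : olt a (f n) -> olt a (OL f).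

Definition osup2 (a b : Ord) : Ord := OL (fun n => if n is 0 then a else b).

(* Coding of finite sequences of naturals as naturals (injective).      *)
Definition pairn (x y : nat) : nat := 2 ^ x * (2 * y).+1.
Definition code (s : seq nat) : nat := foldr pairn 0 s.

Definition fbar (f : nat -> nat) (n : nat) : nat := code (mkseq f n).

(* The Suslin functional, as a (total, single-valued) relation S(g) = b. *)
Definition S_val (g : nat -> nat) (b : nat) : Prop :=
  (b = 0 /\ forall f : nat -> nat, exists n, g (fbar f n) = 0) \/
  (b = 1 /\ exists f : nat -> nat, forall n, 0 < g (fbar f n)).

Definition swap_seq (T : Type) (d : T) (s : seq T) (i j : nat) : seq T :=
  [seq nth d s (if l == i then j else if l == j then i else l) | l <- iota 0 (size s)].

Definition fn := nat -> nat.

(* Kleene computations {e}(S, a, f) = b relative to S (schemes S1-S9),  *)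
(* with the ordinal rank of the computation tree:                       *)
(* CompR e a f b r  <->  <e,a,f,b> \in Omega_S and its computation tree *)
(* has rank r  (rank of a node = sup over children c of (rank c + 1)).  *)
Inductive CompR : nat -> seq nat -> seq fn -> nat -> Ord -> Prop :=
| S1 x a f : CompR (code [:: 1; (size a).+1; size f]) (x :: a) f x.+1 OZ
| S2 q a f : CompR (code [:: 2; size a; size f; q]) a f q OZ
| S3 x a f : CompR (code [:: 3; (size a).+1; size f]) (x :: a) f x OZ
| S4 e1 e2 a f c b r1 r2 :
    CompR e2 a f c r2 -> CompR e1 (c :: a) f b r1 ->
    CompR (code [:: 4; size a; size f; e1; e2]) a f b (osup2 (OS r1) (OS r2))
| S5z e1 e2 a f b r1 :
    CompR e1 a f b r1 ->
    CompR (code [:: 5; (size a).+1; size f; e1; e2]) (0 :: a) f b (OS r1)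
| S5s e1 e2 m a f c b r1 r2 :
    CompR (code [:: 5; (size a).+1; size f; e1; e2]) (m :: a) f c r1 ->
    CompR e2 (c :: m :: a) f b r2 ->
    CompR (code [:: 5; (size a).+1; size f; e1; e2]) (m.+1 :: a) f b
          (osup2 (OS r1) (OS r2))
| S6i e1 i j a f b r :
    i < size a -> j < size a ->
    CompR e1 (swap_seq 0 a i j) f b r ->
    CompR (code [:: 6; size a; size f; e1; i; j; 0]) a f b (OS r)
| S6f e1 i j a f b r :
    i < size f -> j < size f ->
    CompR e1 a (swap_seq (fun _ => 0) f i j) b r ->
    CompR (code [:: 6; size a; size f; e1; i; j; 1]) a f b (OS r)
| S7 x a g f : CompR (code [:: 7; (size a).+1; (size f).+1]) (x :: a) (g :: f) (g x) OZ
| S8 e1 a f (g : fn) (h : nat -> Ord) b :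
    (forall x, CompR e1 (x :: a) f (g x) (h x)) -> S_val g b ->
    CompR (code [:: 8; size a; size f; e1]) a f b (OL (fun x => OS (h x)))
| S9 d a f b r :
    CompR d a f b r ->
    CompR (code [:: 9; (size a).+1; size f]) (d :: a) f b (OS r).

Definition rank_lt (e : nat) (a : seq nat) (f : seq fn) (b : nat) (alpha : Ord) : Prop :=
  exists r, CompR e a f b r /\ olt r alpha.

Definition pt (k : nat) := 'I_k -> nat -> nat.

Definition open_set (k : nat) (U : pt k -> Prop) : Prop :=
  forall x, U x -> exists m, forall y : pt k,
      (forall (i : 'I_k) n, n < m -> y i n = x i n) -> U y.

Definition clopen (k : nat) (U : pt k -> Prop) : Prop :=
  open_set U /\ open_set (fun x => ~ U x).

Definition suslinA (k : nat) (P : seq nat -> pt k -> Prop) (x : pt k) : Prop :=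
  exists f : nat -> nat, forall n, P (mkseq f n) x.

Inductive Sigma (k : nat) : Ord -> (pt k -> Prop) -> Prop :=
| Sigma0 b A : ole b OZ -> clopen A -> Sigma b A
| SigmaA b A (P : seq nat -> pt k -> Prop) :
    olt OZ b ->
    (forall x, A x <-> suslinA P x) ->
    (forall s, exists g, olt g b /\
        exists B, Sigma g B /\ forall x, P s x <-> ~ B x) ->
    Sigma b A.

Definition Pi (k : nat) (b : Ord) (A : pt k -> Prop) : Prop :=
  exists B, Sigma b B /\ forall x, A x <-> ~ B x.

Definition Suslin (k : nat) (A : pt k -> Prop) : Prop := exists b, Sigma b A.

(* Main.v *)
Require Import Defs.
From mathcomp Require Import all_boot.
From Stdlib Require Import Classical ClassicalEpsilon FunctionalExtensionality.
Set Implicit Arguments. Unset Strict Implicit. Unset Printing Implicit Defensive.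

Lemma ole_OL f n a : ole a (f n) -> ole a (OL f).
Proof.
elim: a => [|a IH|g IH] H.
- exact: oleZ.
- inversion H; subst. apply: oleS. apply: (@oltL _ _ n). assumption.
- inversion H; subst. apply: oleL => m. apply: IH. auto.
Qed.

Lemma ole_refl a : ole a a.
Proof.
elim: a => [|a IH|f IH].
- exact: oleZ.
- apply: oleS; apply: oltS; exact: IH.
- apply: oleL => n; apply: (@ole_OL _ n); exact: IH.
Qed.

Lemma choice_fun {A B} (R : A -> B -> Prop) :
  (forall x, exists y, R x y) -> exists g, forall x, R x (g x).
Proof.
move=> H; exists (fun x => proj1_sig (constructive_indefinite_description _ (H x))).
move=> x; exact: proj2_sig.
Qed.

Definition PiS {k} (A : pt k -> Prop) := exists B, Suslin B /\ forall x, A x <-> ~ B x.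

Lemma Suslin_char_back k (A : pt k -> Prop) (P : seq nat -> pt k -> Prop) :
 (forall s, PiS (P s)) -> (forall x, A x <-> suslinA P x) -> Suslin A.
Proof.
move=> HP HA.
have: forall s, exists g, exists B, Sigma g B /\ forall x, P s x <-> ~ B x.
  move=> s; case: (HP s) => B [[g Hg] HB]; exists g, B; split => //.
case/choice_fun => G HG.
pose M := OL (fun n => if (unpickle n : option (seq nat)) is Some s then G s else OZ).
exists (OS M). apply: (SigmaA _ HA).
- exact: oltS (oleZ _).
- move=> s; exists (G s); split; last exact: HG.
  apply: oltS. apply: (@ole_OL _ (pickle s)). change (ole (G s) (if (unpickle (pickle s) : option (seq nat)) is Some s' then G s' else OZ)). rewrite pickleK. exact: ole_refl.
Qed.

Lemma Suslin_char k (A : pt k -> Prop) : Suslin A ->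
  exists P, (forall s, PiS (P s)) /\ forall x, A x <-> suslinA P x.
Proof.
case=> b H; case: H => {b A}.
- move=> b A _ [HoA HoC]. exists (fun _ => A); split.
  + move=> s; exists (fun x => ~ A x); split; last first.
      by move=> x; split; [move=> Ax nA|move/NNPP].
    exists OZ; apply: Sigma0; first exact: oleZ. split => //.
    move=> x /NNPP Ax. case: (HoA x Ax) => m Hm; exists m => y Hy nAy; exact: nAy (Hm y Hy).
  + move=> x; split; [move=> Ax; exists (fun _ => 0) => n // | by case=> f /(_ 0)].
- move=> b A P _ HA HP. exists P; split => // s.
  case: (HP s) => g [_ [B [HB HPB]]]. exists B; split => //; by exists g.
Qed.

Lemma Suslin_ext k (A A' : pt k -> Prop) : (forall x, A x <-> A' x) -> Suslin A -> Suslin A'.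
Proof.
move=> HAA /Suslin_char [P [HP HA]]; apply: (Suslin_char_back HP) => x.
have := HAA x; have := HA x; tauto.
Qed.

Lemma Suslin_const k (C : Prop) : Suslin (fun _ : pt k => C).
Proof.
exists OZ; apply: Sigma0; first exact: oleZ.
split => x H; exists 0 => y _ //.
Qed.

Lemma Suslin_not k (A : pt k -> Prop) : Suslin A -> Suslin (fun x => ~ A x).
Proof.
move=> HA. apply: (@Suslin_char_back _ _ (fun _ x => ~ A x)).
- move=> s; exists A; split => // x; tauto.
- move=> x; split; [move=> H; exists (fun _ => 0) => n // | by case=> f /(_ 0)].
Qed.

Lemma PiS_of k (A : pt k -> Prop) : Suslin A -> PiS A.
Proof.
move=> HA; exists (fun x => ~ A x); split; first exact: Suslin_not.
move=> x; split; [tauto | exact: NNPP].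
Qed.

Lemma Suslin_suslinA k (P : seq nat -> pt k -> Prop) :
  (forall s, Suslin (P s)) -> Suslin (suslinA P).
Proof. move=> HP; apply: Suslin_char_back; [move=> s; exact: PiS_of | done]. Qed.

Lemma mkseqSl (f : nat -> nat) n : mkseq f n.+1 = f 0 :: mkseq (fun i => f i.+1) n.
Proof.
rewrite /mkseq /= -[1]/(1+0) iotaDl -map_comp. congr (_ :: _).
Qed.

Lemma Suslin_ex_nat k (A : nat -> pt k -> Prop) :
  (forall n, Suslin (A n)) -> Suslin (fun x => exists n, A n x).
Proof.
move=> HA. have [P HP] := choice_fun (fun n => Suslin_char (HA n)).
pose Q s := if s is n :: s' then P n s' else (fun _ : pt k => True).
apply: (@Suslin_char_back _ _ Q).
- case=> [|n s] /=.
  + exists (fun _ => False); split; [exact: Suslin_const | by move=> x; split => // _ []].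
  + exact: (HP n).1.
- move=> x; split.
  + case=> n /(HP n).2 [f Hf].
    exists (fun i => if i is i'.+1 then f i' else n) => -[|m] //.
    rewrite mkseqSl /=. exact: Hf.
  + case=> f Hf. exists (f 0). apply/(HP (f 0)).2.
    exists (fun i => f i.+1) => m. have := Hf m.+1. by rewrite mkseqSl.
Qed.

Lemma Suslin_all_nat k (A : nat -> pt k -> Prop) :
  (forall n, Suslin (A n)) -> Suslin (fun x => forall n, A n x).
Proof.
move=> HA. apply: (@Suslin_ext _ (fun x => ~ exists n, ~ A n x)).
- move=> x; split.
  + move=> H n; apply: NNPP => nA; apply: H; by exists n.
  + move=> H [n]; apply; exact: H.
- apply: Suslin_not; apply: Suslin_ex_nat => n; exact: Suslin_not.
Qed.

Lemma Suslin_or k (A B : pt k -> Prop) : Suslin A -> Suslin B -> Suslin (fun x => A x \/ B x).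
Proof.
move=> HA HB. apply: (@Suslin_ext _ (fun x => exists n, if n is 0 then A x else B x)).
- move=> x; split; first by case=> -[|n] H; [left|right].
  by case=> H; [exists 0|exists 1].
- apply: Suslin_ex_nat => -[|n] //.
Qed.

Lemma Suslin_and k (A B : pt k -> Prop) : Suslin A -> Suslin B -> Suslin (fun x => A x /\ B x).
Proof.
move=> HA HB. apply: (@Suslin_ext _ (fun x => forall n, if n is 0 then A x else B x)).
- move=> x; split; first by move=> H; split; [exact: (H 0)|exact: (H 1)].
  by case=> H1 H2 -[|n].
- apply: Suslin_all_nat => -[|n] //.
Qed.

Lemma Suslin_ex_count k (T : countType) (A : T -> pt k -> Prop) :
  (forall t, Suslin (A t)) -> Suslin (fun x => exists t, A t x).
Proof.
move=> HA.
apply: (@Suslin_ext _ (fun x => exists n, if (unpickle n : option T) is Some t then A t x else False)).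
- move=> x; split.
  + case=> n; case: (unpickle n) => // t H; by exists t.
  + case=> t H; exists (pickle t); by rewrite pickleK.
- apply: Suslin_ex_nat => n; case: (unpickle n) => [t|]; [exact: HA | exact: Suslin_const].
Qed.

Lemma Suslin_constP k (C : pt k -> Prop) : (forall x y, C x -> C y) -> Suslin C.
Proof.
move=> HC. case: (classic (C (fun _ _ => 0))) => H.
- apply: (@Suslin_ext _ (fun _ => True)); last exact: Suslin_const.
  move=> x; split => // _; exact: HC H.
- apply: (@Suslin_ext _ (fun _ => False)); last exact: Suslin_const.
  move=> x; split => // Hx; apply: H; exact: HC Hx.
Qed.

Lemma Suslin_and_dep k (C : Prop) (A : pt k -> Prop) :
  (C -> Suslin A) -> Suslin (fun x => C /\ A x).
Proof.
move=> H. case: (classic C) => HC.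
- apply: (Suslin_ext _ (H HC)) => x; tauto.
- apply: (@Suslin_ext _ (fun _ => False)); last exact: Suslin_const. move=> x; tauto.
Qed.

Lemma Suslin_coord k (i : 'I_k) x b : Suslin (fun fs : pt k => fs i x = b).
Proof.
exists OZ; apply: Sigma0; first exact: oleZ.
split => fs H; exists x.+1 => y Hy; by rewrite Hy.
Qed.

Lemma pairn_inj x y x' y' : pairn x y = pairn x' y' -> x = x' /\ y = y'.
Proof.
rewrite /pairn. elim: x x' => [|x IH] [|x'] /=; rewrite ?expn0 ?mul1n ?expnS.
- by case=> /eqP; rewrite eqn_pmul2l // => /eqP.
- rewrite -mulnA => H; have := congr1 odd H. by rewrite /= oddM /= oddM.
- rewrite -mulnA => H; have := congr1 odd H. by rewrite /= oddM /= oddM.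
- rewrite -!mulnA => /eqP; rewrite eqn_pmul2l // => /eqP /IH [-> ->]; done.
Qed.

Lemma code_inj : injective code.
Proof.
have pos : forall x y, 0 < pairn x y by move=> *; rewrite /pairn muln_gt0 expn_gt0.
elim => [|x s IH] [|y t] //=.
- move=> H; by have := pos y (code t); rewrite -H.
- move=> H; by have := pos x (code s); rewrite H.
- by case/pairn_inj => -> /IH ->.
Qed.

Lemma S_val_fun g b b' : S_val g b -> S_val g b' -> b = b'.
Proof.
case=> [[-> H0]|[-> [f Hf]]] [[-> H0']|[-> [f' Hf']]] //.
- case: (H0 f') => n; have := Hf' n; by move=> /[swap] ->.
- case: (H0' f) => n; have := Hf n; by move=> /[swap] ->.
Qed.


Lemma CompR_det_gen e a f b r : CompR e a f b r ->
  forall e' a' f' b' r', CompR e' a' f' b' r' -> e = e' -> a = a' -> f = f' -> b = b'.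
Proof.
elim => {e a f b r}
 [x a f | q a f | x a f
 | e1 e2 a f c b r1 r2 H2 IH2 H1 IH1
 | e1 e2 a f b r1 H1 IH1
 | e1 e2 m a f c b r1 r2 H1 IH1 H2 IH2
 | e1 i j a f b r Hi Hj H1 IH1
 | e1 i j a f b r Hi Hj H1 IH1
 | x a g f
 | e1 a f g h b H1 IH1 HS
 | d a f b r H1 IH1];
 move=> E0 A0 F0 B0 R0 H'; case: H' =>
 [x' a' f' | q' a' f' | x' a' f'
 | e1' e2' a' f' c' b' r1' r2' H2' H1'
 | e1' e2' a' f' b' r1' H1'
 | e1' e2' m' a' f' c' b' r1' r2' H1' H2'
 | e1' i' j' a' f' b' r' Hi' Hj' H1'
 | e1' i' j' a' f' b' r' Hi' Hj' H1'
 | x' a' g' f'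
 | e1' a' f' g' h' b' H1' HS'
 | d' a' f' b' r' H1']; move=> /code_inj He Ha Hf; try discriminate He;
 try (injection Ha; intros; subst; discriminate).
all: injection He; intros; subst; try (injection Ha; intros; subst); try (injection Hf; intros; subst); try done.
- have Ec := IH2 _ _ _ _ _ H2' erefl erefl erefl; subst. exact: IH1 _ _ _ _ _ H1' erefl erefl erefl.
- exact: IH1 _ _ _ _ _ H1' erefl erefl erefl.
- have Ec := IH1 _ _ _ _ _ H1' erefl erefl erefl; subst. exact: IH2 _ _ _ _ _ H2' erefl erefl erefl.
- exact: IH1 _ _ _ _ _ H1' erefl erefl erefl.
- exact: IH1 _ _ _ _ _ H1' erefl erefl erefl.
- have Eg : g = g' by apply: functional_extensionality => x; exact: IH1 _ _ _ _ _ _ (H1' x) erefl erefl erefl.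
  subst; exact: S_val_fun HS HS'.
- exact: IH1 _ _ _ _ _ H1' erefl erefl erefl.
Qed.

Lemma CompR_det e a f b r b' r' : CompR e a f b r -> CompR e a f b' r' -> b = b'.
Proof. move=> H H'; exact: CompR_det_gen H _ _ _ _ _ H' erefl erefl erefl. Qed.



Definition stepR (R : nat -> seq nat -> seq fn -> nat -> Prop) (e : nat) (a : seq nat) (F : seq fn) (b : nat) : Prop :=
  (exists x a0, a = x :: a0 /\ e = code [:: 1; (size a0).+1; size F] /\ b = x.+1)
\/ (e = code [:: 2; size a; size F; b])
\/ (exists a0, a = b :: a0 /\ e = code [:: 3; (size a0).+1; size F])
\/ (exists e1 e2 c, e = code [:: 4; size a; size F; e1; e2] /\ R e2 a F c /\ R e1 (c :: a) F b)
\/ (exists e1 e2 a0, a = 0 :: a0 /\ e = code [:: 5; (size a0).+1; size F; e1; e2] /\ R e1 a0 F b)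
\/ (exists e1 e2 m a0 c, a = m.+1 :: a0 /\ e = code [:: 5; (size a0).+1; size F; e1; e2] /\ R (code [:: 5; (size a0).+1; size F; e1; e2]) (m :: a0) F c /\ R e2 (c :: m :: a0) F b)
\/ (exists e1 i j, i < size a /\ j < size a /\ e = code [:: 6; size a; size F; e1; i; j; 0] /\ R e1 (swap_seq 0 a i j) F b)
\/ (exists e1 i j, i < size F /\ j < size F /\ e = code [:: 6; size a; size F; e1; i; j; 1] /\ R e1 a (swap_seq (fun _ => 0) F i j) b)
\/ (exists x a0 g F0, a = x :: a0 /\ F = g :: F0 /\ e = code [:: 7; (size a0).+1; (size F0).+1] /\ b = g x)
\/ (exists e1 g, e = code [:: 8; size a; size F; e1] /\ (forall x, R e1 (x :: a) F (g x)) /\ S_val g b)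
\/ (exists d a0, a = d :: a0 /\ e = code [:: 9; (size a0).+1; size F] /\ R d a0 F b).

Lemma ole_OS_inv r b : ole (OS r) b -> olt r b.
Proof. by move=> H; inversion H. Qed.

Lemma ole_OL_inv f b : ole (OL f) b -> forall n, ole (f n) b.
Proof. by move=> H; inversion H. Qed.

Lemma ole_sup2_inv r1 r2 b : ole (osup2 (OS r1) (OS r2)) b -> olt r1 b /\ olt r2 b.
Proof.
move/ole_OL_inv => H; split; [exact: ole_OS_inv (H 0) | exact: ole_OS_inv (H 1)].
Qed.

Lemma ole_sup2 r1 r2 b : olt r1 b -> olt r2 b -> ole (osup2 (OS r1) (OS r2)) b.
Proof. move=> H1 H2; apply: oleL => -[|n]; exact: oleS. Qed.

Definition RL beta e a F b := rank_lt e a F b beta.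

Lemma step e a F b beta :
  rank_lt e a F b (OS beta) <-> stepR (RL beta) e a F b.
Proof.
split.
- case=> r [H Hlt]. have {Hlt} : ole r beta by inversion Hlt.
  case: H => {e a F b r}
 [x a f | q a f | x a f
 | e1 e2 a f c b r1 r2 H2 H1
 | e1 e2 a f b r1 H1
 | e1 e2 m a f c b r1 r2 H1 H2
 | e1 i j a f b r Hi Hj H1
 | e1 i j a f b r Hi Hj H1
 | x a g f
 | e1 a f g h b H1 HS
 | d a f b r H1] Hle.
  + left; by exists x, a.
  + right; left; done.
  + do 2 right; left; by exists a.
  + case/ole_sup2_inv: Hle => L1 L2.
    do 3 right; left; exists e1, e2, c; split => //; split; [by exists r2| by exists r1].
  + do 4 right; left; exists e1, e2, a; do 2 split => //; exists r1; split => //; exact: ole_OS_inv.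
  + case/ole_sup2_inv: Hle => L1 L2.
    do 5 right; left; exists e1, e2, m, a, c; do 2 split => //; split; [by exists r1| by exists r2].
  + do 6 right; left; exists e1, i, j; do 3 split => //; exists r; split => //; exact: ole_OS_inv.
  + do 7 right; left; exists e1, i, j; do 3 split => //; exists r; split => //; exact: ole_OS_inv.
  + do 8 right; left; by exists x, a, g, f.
  + do 9 right; left; exists e1, g; split => //; split => // x.
    exists (h x); split => //. apply: ole_OS_inv. exact: (ole_OL_inv Hle x).
  + do 10 right; exists d, a; do 2 split => //; exists r; split => //; exact: ole_OS_inv.
- have oltS' : forall r, ole r beta -> olt r (OS beta) by move=> r; exact: oltS.
  case=> [[x [a0 [-> [-> ->]]]]|].
    by exists OZ; split; [exact: S1 | apply: oltS'; exact: oleZ].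
  case=> [->|].
    by exists OZ; split; [exact: S2 | apply: oltS'; exact: oleZ].
  case=> [[a0 [-> ->]]|].
    by exists OZ; split; [exact: S3 | apply: oltS'; exact: oleZ].
  case=> [[e1 [e2 [c [-> [[r2 [H2 L2]] [r1 [H1 L1]]]]]]]|].
    exists (osup2 (OS r1) (OS r2)); split; [exact: S4 H2 H1 | apply: oltS'; exact: ole_sup2].
  case=> [[e1 [e2 [a0 [-> [-> [r1 [H1 L1]]]]]]]|].
    exists (OS r1); split; [exact: S5z | apply: oltS'; exact: oleS].
  case=> [[e1 [e2 [m [a0 [c [-> [-> [[r1 [H1 L1]] [r2 [H2 L2]]]]]]]]]]|].
    exists (osup2 (OS r1) (OS r2)); split; [exact: S5s H1 H2 | apply: oltS'; exact: ole_sup2].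
  case=> [[e1 [i [j [Hi [Hj [-> [r [H1 L1]]]]]]]]|].
    exists (OS r); split; [exact: S6i | apply: oltS'; exact: oleS].
  case=> [[e1 [i [j [Hi [Hj [-> [r [H1 L1]]]]]]]]|].
    exists (OS r); split; [exact: S6f | apply: oltS'; exact: oleS].
  case=> [[x [a0 [g [F0 [-> [-> [-> ->]]]]]]]|].
    by exists OZ; split; [exact: S7 | apply: oltS'; exact: oleZ].
  case=> [[e1 [g [-> [HR HS]]]]|].
    have [h Hh] := choice_fun HR.
    exists (OL (fun x => OS (h x))); split.
      apply: S8 HS => x; exact: (Hh x).1.
    apply: oltS'; apply: oleL => x; apply: oleS; exact: (Hh x).2.
  case=> [d [a0 [-> [-> [r [H1 L1]]]]]].
  exists (OS r); split; [exact: S9 | apply: oltS'; exact: oleS].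
Qed.


Lemma rank_det e a F y y' beta : rank_lt e a F y beta -> rank_lt e a F y' beta -> y = y'.
Proof. by case=> r [H _] [r' [H' _]]; exact: CompR_det H H'. Qed.

Lemma S8_equiv (R : nat -> nat -> Prop) b : (forall x y y', R x y -> R x y' -> y = y') ->
 (exists g, (forall x, R x (g x)) /\ S_val g b) <->
 (forall x, exists y, R x y) /\ ((b = 0 /\ ~ (exists h, forall n, ~ R (code (mkseq h n)) 0))
    \/ (b = 1 /\ exists h, forall n, ~ R (code (mkseq h n)) 0)).
Proof.
move=> Hdet; split.
- case=> g [Hg HS]; split; first by move=> x; exists (g x).
  case: HS => [[-> H0]|[-> [h Hh]]].
  + left; split => //; case=> h Hh; case: (H0 h) => n Hn; apply: (Hh n).
    have := Hg (fbar h n); by rewrite Hn.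
  + right; split => //; exists h => n HR.
    have E := Hdet _ _ _ HR (Hg (fbar h n)). have := Hh n; by rewrite -E.
- case=> Htot Hb; have [g Hg] := choice_fun Htot; exists g; split => //.
  case: Hb => [[-> Hn]|[-> [h Hh]]].
  + left; split => // h. apply: NNPP => Hno. apply: Hn; exists h => n HR.
    apply: Hno; exists n. exact: Hdet _ _ _ (Hg _) HR.
  + right; split => //; exists h => n. rewrite lt0n; apply/eqP => E.
    apply: (Hh n). have := Hg (fbar h n); by rewrite E.
Qed.

Lemma swap_map (T : Type) (fs : T -> fn) d (l : seq T) i j : i < size l -> j < size l ->
  swap_seq (fun _ => 0) (map fs l) i j = map fs (swap_seq d l i j).
Proof.
move=> Hi Hj. rewrite /swap_seq size_map -map_comp; apply/eq_in_map => n.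
rewrite mem_iota add0n => /andP [_ Hn] /=. rewrite (@nth_map T d fn (fun _ => 0) fs) //. by case: (n == i) => //; case: (n == j).
Qed.

Lemma C6f_suslin k beta
  (IH : forall e a b (l : seq 'I_k), Suslin (fun fs : pt k => rank_lt e a (map fs l) b beta))
  e a b (l : seq 'I_k) :
  Suslin (fun fs : pt k => exists e1 i j, i < size (map fs l) /\ j < size (map fs l) /\
     e = code [:: 6; size a; size (map fs l); e1; i; j; 1] /\
     RL beta e1 a (swap_seq (fun _ => 0) (map fs l) i j) b).
Proof.
case: l => [|d l].
  by apply: Suslin_constP => x y [? [? [? []]]].
apply: (@Suslin_ext _ (fun fs : pt k => exists e1 i j, i < size (d :: l) /\ j < size (d :: l) /\
     e = code [:: 6; size a; size (d :: l); e1; i; j; 1] /\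
     RL beta e1 a (map fs (swap_seq d (d :: l) i j)) b)).
  move=> fs; rewrite size_map; split.
  - case=> e1 [i [j [Hi [Hj [He H]]]]]; exists e1, i, j; do 3 split => //.
    by rewrite (swap_map _ d).
  - case=> e1 [i [j [Hi [Hj [He H]]]]]; exists e1, i, j; do 3 split => //.
    by rewrite -(swap_map _ d).
apply: Suslin_ex_nat => e1; apply: Suslin_ex_nat => i; apply: Suslin_ex_nat => j.
apply: Suslin_and_dep => _; apply: Suslin_and_dep => _; apply: Suslin_and_dep => _.
exact: IH.
Qed.

Lemma C7_suslin k e (a : seq nat) b (l : seq 'I_k) :
  Suslin (fun fs : pt k => exists x a0 g F0, a = x :: a0 /\ map fs l = g :: F0 /\
     e = code [:: 7; (size a0).+1; (size F0).+1] /\ b = g x).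
Proof.
case: l => [|i0 l].
  by apply: Suslin_constP => x y [? [? [? [? [_ [H _]]]]]]; discriminate H.
apply: (@Suslin_ext _ (fun fs : pt k => exists x a0, a = x :: a0 /\
   e = code [:: 7; (size a0).+1; (size l).+1] /\ fs i0 x = b)).
  move=> fs; split.
  - case=> x [a0 [Ha [He Hb]]]; exists x, a0, (fs i0), (map fs l).
    by rewrite size_map.
  - case=> x [a0 [g [F0 [Ha [[Hg HF] [He Hb]]]]]]; exists x, a0; subst.
    by rewrite size_map.
apply: Suslin_ex_nat => x; apply: Suslin_ex_count => a0.
apply: Suslin_and_dep => _; apply: Suslin_and_dep => _; exact: Suslin_coord.
Qed.

Lemma main k beta : forall e a b (l : seq 'I_k),
  Suslin (fun fs : pt k => rank_lt e a (map fs l) b beta).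
Proof.
elim: beta => [|beta IH|f IH] e a b l.
- apply: (@Suslin_ext _ (fun _ => False)); last exact: Suslin_const.
  move=> fs; split => // -[r [_ H]]; inversion H.
- apply: (@Suslin_ext _ (fun fs : pt k => stepR (RL beta) e a (map fs l) b)).
    move=> fs; split; [exact: (step _ _ _ _ _).2 | exact: (step _ _ _ _ _).1].
  have cst : forall C : pt k -> Prop, (forall x y, C x -> C y) -> Suslin C := @Suslin_constP k.
  unfold stepR.
  apply: Suslin_or.
    by apply: cst => x y; rewrite !size_map.
  apply: Suslin_or.
    by apply: cst => x y; rewrite !size_map.
  apply: Suslin_or.
    by apply: cst => x y; rewrite !size_map.
  apply: Suslin_or.
    apply: Suslin_ex_nat => e1; apply: Suslin_ex_nat => e2; apply: Suslin_ex_nat => c.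
    apply: Suslin_and; first by apply: cst => x y; rewrite !size_map.
    by apply: Suslin_and; apply: IH.
  apply: Suslin_or.
    apply: Suslin_ex_nat => e1; apply: Suslin_ex_nat => e2; apply: Suslin_ex_count => a0.
    apply: Suslin_and_dep => _.
    apply: Suslin_and; first by apply: cst => x y; rewrite !size_map.
    by apply: IH.
  apply: Suslin_or.
    apply: Suslin_ex_nat => e1; apply: Suslin_ex_nat => e2; apply: Suslin_ex_nat => m.
    apply: Suslin_ex_count => a0; apply: Suslin_ex_nat => c.
    apply: Suslin_and_dep => _.
    apply: (@Suslin_ext _ (fun fs : pt k => e = code [:: 5; (size a0).+1; size l; e1; e2] /\
       RL beta (code [:: 5; (size a0).+1; size l; e1; e2]) (m :: a0) (map fs l) c /\
       RL beta e2 [:: c, m & a0] (map fs l) b)).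
      by move=> fs; rewrite size_map.
    apply: Suslin_and_dep => _; by apply: Suslin_and; apply: IH.
  apply: Suslin_or.
    apply: Suslin_ex_nat => e1; apply: Suslin_ex_nat => i; apply: Suslin_ex_nat => j.
    apply: Suslin_and_dep => _; apply: Suslin_and_dep => _.
    apply: Suslin_and; first by apply: cst => x y; rewrite !size_map.
    by apply: IH.
  apply: Suslin_or; first exact: C6f_suslin.
  apply: Suslin_or; first exact: C7_suslin.
  apply: Suslin_or.
    apply: Suslin_ex_nat => e1.
    apply: (@Suslin_ext _ (fun fs : pt k => e = code [:: 8; size a; size l; e1] /\
      ((forall x, exists y, RL beta e1 (x :: a) (map fs l) y) /\
       ((b = 0 /\ ~ (exists h, forall n, ~ RL beta e1 (code (mkseq h n) :: a) (map fs l) 0))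
    \/ (b = 1 /\ exists h, forall n, ~ RL beta e1 (code (mkseq h n) :: a) (map fs l) 0))))).
      move=> fs; rewrite size_map.
      have E := @S8_equiv (fun x y => RL beta e1 (x :: a) (map fs l) y) b
                 (fun x y y' => @rank_det _ _ _ _ _ _).
      split.
      + case=> He H; have [g Hg] := E.2 H; by exists g.
      + case=> g [He HS]; split => //; apply: E.1; by exists g.
    apply: Suslin_and_dep => _; apply: Suslin_and.
      apply: Suslin_all_nat => x; apply: Suslin_ex_nat => y; exact: IH.
    apply: Suslin_or; apply: Suslin_and_dep => _.
      apply: Suslin_not.
      apply: (@Suslin_suslinA _ (fun s fs => ~ RL beta e1 (code s :: a) (map fs l) 0)).
      move=> s; apply: Suslin_not; exact: IH.
    apply: (@Suslin_suslinA _ (fun s fs => ~ RL beta e1 (code s :: a) (map fs l) 0)).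
    move=> s; apply: Suslin_not; exact: IH.
  apply: Suslin_ex_nat => d; apply: Suslin_ex_count => a0.
  apply: Suslin_and_dep => _.
  apply: Suslin_and; first by apply: cst => x y; rewrite !size_map.
  by apply: IH.
- apply: (@Suslin_ext _ (fun fs : pt k => exists n, rank_lt e a (map fs l) b (f n))).
    move=> fs; split.
    + case=> n [r [H Hlt]]; exists r; split => //; exact: oltL Hlt.
    + case=> r [H Hlt]; inversion Hlt; subst. by exists n, r.
  apply: Suslin_ex_nat => n; exact: IH.
Qed.

Theorem theorem3p2 (alpha : Ord) (e k : nat) (a : seq nat) (b : nat) :
  Suslin (fun fs : pt k => rank_lt e a [seq fs i | i <- enum 'I_k] b alpha).
Proof. exact: main. Qed.
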